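(* Let $-1<\lambda\le0$. Then the function $t\mapsto-(\phi_\lambda^{[-1]})'(t)$ is non-increasing on $(0,\infty)$. Furthermore, if $-1<\lambda\le-1/2$ this function is convex on $(0,\infty)$, whereas if $-1/2<\lambda\le0$ it fails to be convex on $(0,\infty)$.
   Context: For $\lambda\neq-1,0$, $\phi_\lambda(x)=\frac{1}{\lambda(\lambda+1)}(x^{\lambda+1}-x+\lambda(1-x))$, and $\phi_0(x)=1-x+x\log x$, for $x\ge0$ (value at $0$ as a limit). For $-1<\lambda\le0$, $\phi_\lambda(0)=1/(\lambda+1)$ and $\phi_\lambda$ is convex and strictly decreasing on $[0,1]$ with $\phi_\lambda(1)=0$. The pseudoinverse is $\phi_\lambda^{[-1]}(t)=\phi_\lambda^{-1}(t)$ (inverse of $\phi_\lambda|_{[0,1]}$) for $0\le t<\phi_\lambda(0)$ and $\phi_\lambda^{[-1]}(t)=0$ for $t\ge\phi_\lambda(0)$; for these $\lambda$ it is differentiable on $(0,\infty)$. *)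

(* Defs.v *)
From HB Require Import structures.
From mathcomp Require Import all_boot all_order all_algebra.
From mathcomp Require Import all_classical all_reals all_analysis.
Set Implicit Arguments. Unset Strict Implicit. Unset Printing Implicit Defensive.
Import Order.TTheory GRing.Theory Num.Theory.
Local Open Scope ring_scope.
Local Open Scope classical_set_scope.

(* phi_lambda(x), for x >= 0.  powR satisfies 0 `^ a = 0 for a <> 0, and
   ln 0 = 0 in MathComp-Analysis, so the values at x = 0 agree with the
   limits used in the paper. *)
Definition phi {R : realType} (lam x : R) : R :=
  if lam == 0 then 1 - x + x * ln x
  else (lam * (lam + 1))^-1 * (x `^ (lam + 1) - x + lam * (1 - x)).

(* Pseudoinverse: inverse of phi_lambda restricted to [0,1] on [0, phi(0)),
   and 0 on [phi(0), +oo).  (Values for t < 0 are irrelevant.) *)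
Definition phi_pinv {R : realType} (lam t : R) : R :=
  if t < phi lam 0 then xget 0 [set x : R | 0 <= x <= 1 /\ phi lam x = t]
  else 0.

Definition nonincreasing_pos {R : realType} (f : R -> R) : Prop :=
  forall s t : R, 0 < s -> s <= t -> f t <= f s.

Definition convex_pos {R : realType} (f : R -> R) : Prop :=
  forall (x y a : R), 0 < x -> 0 < y -> 0 <= a <= 1 ->
    f (a * x + (1 - a) * y) <= a * f x + (1 - a) * f y.

(* Main.v *)
Require Import Defs.
From HB Require Import structures.
From mathcomp Require Import all_boot all_order all_algebra.
From mathcomp Require Import all_classical all_reals all_analysis.
From mathcomp Require Import ring lra.
Import Order.TTheory GRing.Theory Num.Theory.
Import numFieldNormedType.Exports.
Local Open Scope ring_scope.
Section abstract.
Variable R : realType.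
Variables P D : R -> R.
Hypothesis P1 : P 1 = 0.
Hypothesis HD : forall x : R, 0 < x -> is_derive x 1 P (D x).
Hypothesis Dneg : forall x : R, 0 < x < 1 -> D x < 0.
Hypothesis Dmono : forall x y : R, 0 < x -> x <= y -> y < 1 -> D x <= D y.
Hypothesis H4 : forall x : R, 0 < x < 1 -> x * (- D x) <= P 0 - P x.
Hypothesis H5 : forall M : R, exists2 eta : R, 0 < eta < 1 &
  forall x, 0 < x <= eta -> M <= - D x.
Hypothesis H6 : forall e : R, 0 < e -> exists2 eta : R, 0 < eta < 1 &
  forall x, 0 < x <= eta -> P 0 - P x <= e.

Definition G t := if t < P 0 then xget 0 [set x : R | 0 <= x <= 1 /\ P x = t]%classic else 0.

Lemma Pcont (x : R) : 0 < x -> (P y @[y --> x] --> P x)%classic.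
Proof. by move=> x0; apply: differentiable_continuous; apply/derivable1_diffP; by case: (HD _ x0). Qed.

Lemma Pwithin (a b : R) : 0 < a -> {within `[a, b], continuous P}%classic.
Proof.
move=> a0; apply: continuous_in_subspaceT => x; rewrite inE/= in_itv/= => /andP[ax _].
by apply: Pcont; exact: lt_le_trans ax.
Qed.

Lemma Pdec_pos (x y : R) : 0 < x -> x < y -> y <= 1 -> P y < P x.
Proof.
move=> x0 xy y1.
have hd : forall z, z \in `]x, y[ -> is_derive z 1 P (D z).
  move=> z; rewrite in_itv/= => /andP[xz _]; apply: HD; exact: lt_trans xz.
have [z] := MVT xy hd (Pwithin x y x0).
rewrite in_itv/= => /andP[xz zy] e.
have : D z < 0 by apply: Dneg; rewrite (lt_trans x0 xz)/=; exact: lt_le_trans y1.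
move=> Dz; rewrite -subr_lt0 e; nra.
Qed.


Lemma H4pos (z : R) : 0 < z < 1 -> P z < P 0.
Proof.
move=> zz; have h := H4 z zz; have hD := Dneg z zz.
case/andP: zz => z0 z1; nra.
Qed.

Lemma Pdec (x y : R) : 0 <= x -> x < y -> y <= 1 -> P y < P x.
Proof.
move=> x0 xy y1; have [x00|xn0] := eqVneq x 0; last first.
  by apply: Pdec_pos => //; rewrite lt_neqAle eq_sym xn0.
rewrite x00 in xy *.
have h1 : P y < P (y / 2).
  apply: Pdec_pos => //; [by rewrite divr_gt0 | lra].
have h2 : P (y / 2) < P 0 by apply: H4pos; apply/andP; split; lra.
exact: lt_trans h1 h2.
Qed.

Lemma Pinj (x y : R) : 0 <= x <= 1 -> 0 <= y <= 1 -> P x = P y -> x = y.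
Proof.
move=> /andP[x0 x1] /andP[y0 y1] e.
have [xy|yx|//] := ltgtP x y.
- by have := Pdec _ _ x0 xy y1; rewrite e ltxx.
- by have := Pdec _ _ y0 yx x1; rewrite e ltxx.
Qed.

Lemma Pge0 (x : R) : 0 <= x <= 1 -> 0 <= P x.
Proof.
move=> /andP[x0 x1]; have [->|xlt1] := eqVneq x 1; first by rewrite P1.
by rewrite -P1 ltW // Pdec // lt_neqAle xlt1.
Qed.

Lemma c_gt0 : 0 < P 0.
Proof. by have := Pdec _ _ (lexx 0) ltr01 (lexx 1); rewrite P1. Qed.

Lemma GP (x : R) : 0 <= x <= 1 -> G (P x) = x.
Proof.
move=> /[dup] x01 /andP[x0 x1]; rewrite /G.
have [->|xn0] := eqVneq x 0; first by rewrite ltxx.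
rewrite Pdec // ?lt_neqAle 1?eq_sym ?xn0 //.
apply: xget_unique; first by split.
by move=> y [y01 e]; apply: Pinj.
Qed.

Lemma Gspec (t : R) : 0 < t < P 0 -> 0 < G t < 1 /\ P (G t) = t.
Proof.
move=> /andP[t0 tc].
have [eta /andP[eta0 eta1] Heta] := H6 (P 0 - t) (ltac:(by rewrite subr_gt0)).
have Pe : t <= P eta.
  by have := Heta eta (ltac:(by rewrite eta0 lexx)); lra.
have [x xin Px] : exists2 x, x \in `[eta, 1] & P x = t.
  apply: IVT; [exact: ltW | exact: Pwithin |].
  have := Pge0 eta (ltac:(by rewrite (ltW eta0) (ltW eta1))).
  rewrite P1 => Pe0; apply/andP; split.
    by rewrite ge_min; apply/orP; right; exact: ltW.
  by rewrite le_max Pe.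
move: xin; rewrite in_itv/= => /andP[ex x1].
have x0 : 0 < x by exact: lt_le_trans ex.
have Gx : G t = x.
  rewrite -Px GP // (ltW x0) x1 //.
have xn1 : x != 1 by apply/eqP => x1e; move: Px; rewrite x1e P1 => t0e; move: t0; rewrite -t0e ltxx.
by rewrite Gx x0 lt_neqAle xn1 x1.
Qed.

Lemma Gmono (s t : R) : 0 < s -> s <= t -> t < P 0 -> G t <= G s.
Proof.
move=> s0 st tc.
have [/andP[gs0 gs1] Ps] := Gspec s (ltac:(by rewrite s0 (le_lt_trans st tc))).
have [/andP[gt0 gt1] Pt] := Gspec t (ltac:(by rewrite (lt_le_trans s0 st) tc)).
rewrite leNgt; apply/negP => h.
have := Pdec _ _ (ltW gs0) h (ltW gt1); rewrite Ps Pt; lra.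
Qed.


Lemma Gderiv (t : R) : 0 < t < P 0 -> is_derive t 1 G (D (G t))^-1.
Proof.
move=> tt; have [/andP[x0 x1] Px] := Gspec t tt.
rewrite -[in X in is_derive X]Px.
apply: (is_derive_inverse (f := P)).
- near=> y; apply: GP; apply/andP; split; apply: ltW; near: y.
  + exact: lt_nbhsr.
  + exact: lt_nbhsl.
- near=> y; apply: Pcont; near: y; exact: lt_nbhsr.
- exact: HD.
- by rewrite lt_eqF // Dneg // x0 x1.
Unshelve. all: by end_near.
Qed.

Definition F t := - derive1 G t.

Lemma Fin (t : R) : 0 < t < P 0 -> F t = - (D (G t))^-1.
Proof. by move=> tt; rewrite /F derive1E; case: (Gderiv t tt) => _ ->. Qed.

Lemma Fout (t : R) : P 0 < t -> F t = 0.
Proof.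
move=> ct.
have : is_derive t 1 G 0.
  apply: (near_eq_is_derive _ (is_derive_cst (0 : R) t 1)).
  near=> s; rewrite /G ifF //; apply/negbTE; rewrite -leNgt; apply: ltW; near: s.
  exact: lt_nbhsr.
by rewrite /F derive1E => -[_ ->]; rewrite oppr0.
Unshelve. all: by end_near.
Qed.

Lemma Fc : F (P 0) = 0.
Proof.
rewrite /F /derive1.
suff -> : lim ((fun h => h^-1 *: (G (h + P 0) - G (P 0))) @ 0^')%classic = 0 by rewrite oppr0.
apply: cvg_lim => //.
apply/cvgrPdist_le => e e0.
have [eta /andP[eta0 eta1] Heta] := H5 e^-1.
have Peta : P eta < P 0 by apply: H4pos; rewrite eta0 eta1.
have Peta0 : 0 <= P eta by apply: Pge0; rewrite (ltW eta0) (ltW eta1).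
near=> h.
have hd : `|h| < P 0 - P eta by near: h; apply: dnbhs0_lt; rewrite subr_gt0.
have Gc : G (P 0) = 0 by rewrite /G ltxx.
rewrite Gc subr0 sub0r normrN.
have [h0|hlt0] := leP 0 h.
  by rewrite /G ifF ?scaler0 ?mulr0 ?normr0 ?(ltW e0) //; apply/negbTE; rewrite -leNgt lerDr.
rewrite ltr0_norm // in hd.
have tt : 0 < h + P 0 < P 0 by apply/andP; split; lra.
have [/andP[x0 x1] Px] := Gspec _ tt.
set x := G (h + P 0) in x0 x1 Px *.
have xe : x <= eta.
  rewrite leNgt; apply/negP => ex.
  have := Pdec _ _ (ltW eta0) ex (ltW x1); rewrite Px; lra.
have hD := Heta x (ltac:(by rewrite x0 xe)).
have h4 := H4 x (ltac:(by rewrite x0 x1)).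
have hneg := Dneg x (ltac:(by rewrite x0 x1)).
rewrite Px in h4.
rewrite normrM normrV ?unitfE ?lt_eqF // ltr0_norm // gtr0_norm //.
have ie : e^-1 > 0 by rewrite invr_gt0.
have h5 : x * e^-1 <= - h.
  apply: le_trans (_ : x * - D x <= _); last by lra.
  by rewrite ler_wpM2l // ltW.
rewrite mulrC ler_pdivrMr ?oppr_gt0 //.
have := ler_wpM2l (ltW e0) h5; rewrite mulrCA divff ?mulr1 // gt_eqF //.
Unshelve. all: by end_near.
Qed.

Lemma Fpos (t : R) : 0 < t -> 0 <= F t.
Proof.
move=> t0; have [tc|ct|->] := ltgtP t (P 0).
- have tt : 0 < t < P 0 by rewrite t0 tc.
  have [xx _] := Gspec t tt.
  by rewrite Fin // -invrN invr_ge0 oppr_ge0 ltW // Dneg.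
- by rewrite Fout.
- by rewrite Fc.
Qed.

Lemma Fnonincr : nonincreasing_pos F.
Proof.
move=> s t s0 st.
have [tc|ct] := ltP t (P 0); last first.
  have -> : F t = 0.
    by move: ct; rewrite le_eqVlt => /predU1P[<-|]; [exact: Fc | exact: Fout].
  exact: Fpos.
have sc : s < P 0 by exact: le_lt_trans tc.
have ss : 0 < s < P 0 by rewrite s0 sc.
have tt : 0 < t < P 0 by rewrite (lt_le_trans s0 st) tc.
rewrite !Fin //.
have [/andP[xs0 xs1] _] := Gspec s ss.
have [/andP[xt0 xt1] _] := Gspec t tt.
have g := Gmono s t s0 st tc.
have dm := Dmono _ _ xt0 g xs1.
have dn := Dneg (G s) (ltac:(by rewrite xs0 xs1)).
rewrite -!invrN lef_pV2 ?posrE ?oppr_gt0 //; first by rewrite lerN2.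
exact: le_lt_trans dn.
Qed.


Lemma seg_convex (f df : R -> R) (a b : R) : a < b ->
  (forall x : R, a < x < b -> is_derive x 1 f (df x)) ->
  (forall x y : R, a < x -> x <= y -> y < b -> df x <= df y) ->
  (f x @[x --> b^'-] --> f b)%classic -> (f x @[x --> a^'+] --> f a)%classic ->
  forall z : R, a <= z <= b -> (b - a) * f z <= (b - z) * f a + (z - a) * f b.
Proof.
move=> ab hd hm cb ca z /andP[az zb].
have [<-|azn] := eqVneq a z; first by lra.
have [->|zbn] := eqVneq z b; first by lra.
have az' : a < z by rewrite lt_neqAle azn.
have zb' : z < b by rewrite lt_neqAle zbn.
have cz : (f x @[x --> z] --> f z)%classic.
  apply: differentiable_continuous; apply/derivable1_diffP.
  by case: (hd z (ltac:(by rewrite az' zb'))).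
have [c2 c2in e2] : exists2 c, c \in `]z, b[ & f b - f z = df c * (b - z).
  apply: MVT => //.
    move=> x; rewrite in_itv/= => /andP[zx xb]; apply: hd.
    by rewrite (lt_trans az' zx) xb.
  apply: derivable_oo_LRcontinuous_within; split => //.
    move=> x; rewrite in_itv/= => /andP[zx xb].
    by case: (hd x (ltac:(by rewrite (lt_trans az' zx) xb))).
  exact: cvg_at_right_filter.
have [c1 c1in e1] : exists2 c, c \in `]a, z[ & f z - f a = df c * (z - a).
  apply: MVT => //.
    move=> x; rewrite in_itv/= => /andP[ax xz]; apply: hd.
    by rewrite ax (lt_trans xz zb').
  apply: derivable_oo_LRcontinuous_within; split => //.
    move=> x; rewrite in_itv/= => /andP[ax xz].
    by case: (hd x (ltac:(by rewrite ax (lt_trans xz zb')))).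
  exact: cvg_at_left_filter.
move: c1in c2in; rewrite !in_itv/= => /andP[ac1 c1z] /andP[zc2 c2b].
have dd : df c1 <= df c2 by apply: hm => //; apply: ltW; exact: lt_trans zc2.
have hp : 0 <= (b - z) * (z - a) * (df c2 - df c1).
  by apply: mulr_ge0; [apply: mulr_ge0|]; lra.
nra.
Qed.


Section conv.
Variable D2 : R -> R.
Hypothesis HD2 : forall x : R, 0 < x < 1 -> is_derive x 1 D (D2 x).
Hypothesis Hh : forall x y : R, 0 < x -> x <= y -> y < 1 ->
  D2 y / D y ^+ 3 <= D2 x / D x ^+ 3.

Lemma Fderiv (t : R) : 0 < t < P 0 -> is_derive t 1 F (D2 (G t) / D (G t) ^+ 3).
Proof.
move=> tt; have [/andP[x0 x1] _] := Gspec t tt.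
have hDG := is_derive1_comp (HD2 (G t) (ltac:(by rewrite x0 x1))) (Gderiv t tt).
have Dn : (D \o G) t != 0 by rewrite /= lt_eqF // Dneg // x0 x1.
have hV := is_deriveV Dn hDG.
have hN := is_deriveN hV.
apply: (near_eq_is_derive _ (is_derive_eq hN _)).
  case/andP: tt => t0 tc.
  near=> s; rewrite Fin //=; apply/andP; split; near: s.
  + exact: lt_nbhsr.
  + exact: lt_nbhsl.
have Dn' : D (G t) != 0 by [].
rewrite /=; set d := D (G t); set d2 := D2 (G t).
change (- (- (d ^+ 2)^-1 * (d2 * d^-1)) = d2 / d ^+ 3).
by field.
Unshelve. all: by end_near.
Qed.


Lemma Fcont_left : (F x @[x --> (P 0)^'-] --> F (P 0))%classic.
Proof.
rewrite Fc; apply/cvgrPdist_le => e e0.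
have [eta /andP[eta0 eta1] Heta] := H5 e^-1.
have Peta : P eta < P 0 by apply: H4pos; rewrite eta0 eta1.
have Peta0 : 0 <= P eta by apply: Pge0; rewrite (ltW eta0) (ltW eta1).
near=> s.
have sc : s < P 0 by near: s; exact: nbhs_left_lt.
have se : P eta < s by near: s; exact: nbhs_left_gt.
have tt : 0 < s < P 0 by rewrite sc (le_lt_trans Peta0 se).
have [/andP[x0 x1] Px] := Gspec _ tt.
have xe : G s <= eta.
  rewrite leNgt; apply/negP => ex.
  have := Pdec _ _ (ltW eta0) ex (ltW x1); rewrite Px; lra.
have hD := Heta (G s) (ltac:(by rewrite x0 xe)).
have ie : e^-1 > 0 by rewrite invr_gt0.
rewrite sub0r normrN Fin // -invrN ger0_norm; last first.
  by rewrite invr_ge0; exact: le_trans (ltW ie) hD.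
rewrite -[e in _ <= e]invrK lef_pV2 ?posrE //.
exact: lt_le_trans ie hD.
Unshelve. all: by end_near.
Qed.

Lemma Fcont (t : R) : 0 < t < P 0 -> (F x @[x --> t] --> F t)%classic.
Proof.
move=> tt; apply: differentiable_continuous; apply/derivable1_diffP.
by case: (Fderiv t tt).
Qed.

Lemma Fseg (a b : R) : 0 < a -> a < b -> b <= P 0 ->
  forall z, a <= z <= b -> (b - a) * F z <= (b - z) * F a + (z - a) * F b.
Proof.
move=> a0 ab bc.
apply: (@seg_convex F (fun t => D2 (G t) / D (G t) ^+ 3)) => //.
- move=> x /andP[ax xb]; apply: Fderiv.
  by rewrite (lt_trans a0 ax) (lt_le_trans xb bc).
- move=> x y ax xy yb.
  have x0 : 0 < x by exact: lt_trans ax.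
  have yc : y < P 0 by exact: lt_le_trans bc.
  have [/andP[gx0 gx1] _] := Gspec x (ltac:(by rewrite x0 (le_lt_trans xy yc))).
  have [/andP[gy0 gy1] _] := Gspec y (ltac:(by rewrite (lt_le_trans x0 xy) yc)).
  apply: Hh => //; exact: Gmono.
- move: bc; rewrite le_eqVlt => /predU1P[->|bc]; first exact: Fcont_left.
  apply: cvg_at_left_filter; apply: Fcont.
  by rewrite (lt_trans a0 ab) bc.
- apply: cvg_at_right_filter; apply: Fcont.
  by rewrite a0 (lt_le_trans ab bc).
Qed.

Lemma Fconvex_le (x y a : R) : 0 < x -> x <= y -> 0 <= a <= 1 ->
  F (a * x + (1 - a) * y) <= a * F x + (1 - a) * F y.
Proof.
move=> x0 xy /andP[a0 a1].
set z := a * x + (1 - a) * y.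
have xz : x <= z by rewrite /z; nra.
have zy : z <= y by rewrite /z; nra.
have Fx0 := Fpos x x0.
have Fy0 := Fpos y (lt_le_trans x0 xy).
have Fz0 := Fpos z (lt_le_trans x0 xz).
have [exy|xyn] := eqVneq x y.
  rewrite /z -exy; have -> : a * x + (1 - a) * x = x by ring.
  have -> : a * F x + (1 - a) * F x = F x by ring.
  by [].
have xy' : x < y by rewrite lt_neqAle xyn.
have [yc|cy] := leP y (P 0).
  have := Fseg x y x0 xy' yc z (ltac:(by rewrite xz zy)).
  have e1 : y - z = a * (y - x) by rewrite /z; ring.
  have e2 : z - x = (1 - a) * (y - x) by rewrite /z; ring.
  rewrite e1 e2 => h.
  have yx0 : 0 < y - x by rewrite subr_gt0.
  rewrite -(ler_pM2l yx0); nra.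
have Fy : F y = 0 by exact: Fout.
rewrite Fy mulr0 addr0.
have [zc|cz] := ltP z (P 0); last first.
  have -> : F z = 0.
    by move: cz; rewrite le_eqVlt => /predU1P[<-|]; [exact: Fc | exact: Fout].
  exact: mulr_ge0.
have xc : x < P 0 by exact: le_lt_trans zc.
have := Fseg x (P 0) x0 xc (lexx _) z (ltac:(by rewrite xz (ltW zc))).
rewrite Fc mulr0 addr0 => h.
have cza : P 0 - z <= a * (P 0 - x) by rewrite /z; nra.
have cx0 : 0 < P 0 - x by rewrite subr_gt0.
rewrite -(ler_pM2l cx0); nra.
Qed.

Lemma Fconvex : convex_pos F.
Proof.
move=> x y a x0 y0 aa.
have [xy|yx] := leP x y; first exact: Fconvex_le.
have aa' : 0 <= 1 - a <= 1 by case/andP: aa => a0 a1; apply/andP; split; lra.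
have := Fconvex_le y x (1 - a) y0 (ltW yx) aa'.
have -> : 1 - (1 - a) = a by ring.
by rewrite addrC [X in _ <= X]addrC.
Qed.

End conv.


Section nc.
Hypothesis Hnc : forall K : R, exists2 x : R, 0 < x < 2^-1 &
  K * (P 0 - P x) < - (D x)^-1.

Lemma Fnonconvex : ~ convex_pos F.
Proof.
move=> hc.
set x0 : R := 2^-1.
have x00 : 0 < x0 by rewrite /x0 invr_gt0.
have x01 : x0 < 1 by rewrite /x0 invf_lt1 // ltr1n.
set s0 := P x0.
have s0c : s0 < P 0 by apply: H4pos; rewrite x00 x01.
have s00 : 0 < s0 by rewrite /s0 -P1; apply: Pdec => //; exact: ltW.
set K := F s0 / (P 0 - s0).
have [x /andP[xpos xh] hk] := Hnc K.
have x1 : x < 1 by exact: lt_trans x01.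
have ss0 : s0 < P x by apply: Pdec => //; [exact: ltW | exact: ltW].
have sc : P x < P 0 by apply: H4pos; rewrite xpos x1.
have Fs : F (P x) = - (D x)^-1.
  rewrite Fin; last by rewrite sc (lt_trans s00 ss0).
  by rewrite GP // (ltW xpos) (ltW x1).
set a := (P 0 - P x) / (P 0 - s0).
have cs0 : 0 < P 0 - s0 by rewrite subr_gt0.
have a0 : 0 <= a by rewrite /a divr_ge0 // subr_ge0 ltW.
have a1 : a <= 1 by rewrite /a ler_pdivrMr // mul1r; lra.
have := hc s0 (P 0) a s00 c_gt0 (ltac:(by rewrite a0 a1)).
have -> : a * s0 + (1 - a) * P 0 = P x.
  rewrite /a; field; exact: lt0r_neq0.
rewrite Fc mulr0 addr0 Fs => h.
move: hk; rewrite ltNge => /negP; apply.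
apply: (le_trans h); rewrite /a /K.
rewrite le_eqVlt; apply/orP; left; apply/eqP; field; exact: lt0r_neq0.
Qed.

End nc.

End abstract.
Lemma scR (R : realType) (a b : R) : a *: b = a * b. Proof. by []. Qed.

Section negcase.
Variable R : realType.
Variable lam : R.
Hypothesis l1 : -1 < lam.
Hypothesis l0 : lam < 0.

Let l0' : lam != 0. Proof. by rewrite lt_eqF. Qed.
Let l1' : lam + 1 != 0. Proof. by rewrite gt_eqF // -ltrBlDr sub0r. Qed.
Let l1p : 0 < lam + 1. Proof. by rewrite -ltrBlDr sub0r. Qed.

Definition Dn (x : R) := (x `^ lam - 1) / lam.
Definition D2n (x : R) := x `^ (lam - 1).

Lemma phiE (x : R) : phi lam x = (lam * (lam + 1))^-1 * (x `^ (lam + 1) - x + lam * (1 - x)).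
Proof. by rewrite /phi (negbTE l0'). Qed.

Lemma phin0 : phi lam 0 = (lam * (lam + 1))^-1 * lam.
Proof. by rewrite phiE powR0 // subr0 subr0 add0r mulr1. Qed.

Lemma phin1 : phi lam 1 = 0.
Proof. rewrite phiE powR1 /=; ring. Qed.

Lemma powE (x a : R) : 0 < x -> x `^ a = expR (a * ln x).
Proof. by move=> x0; rewrite /powR gt_eqF. Qed.

Lemma powS (x : R) : 0 < x -> x `^ (lam + 1) = x * x `^ lam.
Proof.
move=> x0; rewrite powRD; last by rewrite gt_eqF // implybT.
by rewrite powRr1 ?ltW // mulrC.
Qed.

Lemma En_gt1 (x : R) : 0 < x < 1 -> 1 < x `^ lam.
Proof.
move=> /andP[x0 x1]; rewrite powE // expR_gt1.
by rewrite nmulr_rgt0 // ln_lt0 // x0 x1.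
Qed.

Lemma HDn (x : R) : 0 < x -> is_derive x 1 (phi lam) (Dn x).
Proof.
move=> x0.
have -> : phi lam = (fun y : R => (lam * (lam + 1))^-1 * (y `^ (lam + 1) - y + lam * (1 - y))).
  by apply/funext => y; rewrite phiE.
have hp := is_derive1_powR (lam + 1) x0.
apply: is_derive_eq.
rewrite !scR addrK /Dn; field.
by rewrite l0' l1'.
Qed.

Lemma Dnneg (x : R) : 0 < x < 1 -> Dn x < 0.
Proof.
move=> xx; have := En_gt1 x xx; rewrite /Dn => h.
by rewrite pmulr_rlt0 ?subr_gt0 // invr_lt0.
Qed.

Lemma Dnmono (x y : R) : 0 < x -> x <= y -> y < 1 -> Dn x <= Dn y.
Proof.
move=> x0 xy y1; rewrite /Dn; apply: ler_wnM2r; first by rewrite invr_le0 ltW.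
rewrite lerD2r !powE //; last exact: lt_le_trans xy.
rewrite ler_expR; apply: ler_wnM2l; first exact: ltW.
by rewrite ler_ln // posrE //; exact: lt_le_trans xy.
Qed.

Lemma H4n (x : R) : 0 < x < 1 -> x * (- Dn x) <= phi lam 0 - phi lam x.
Proof.
move=> /[dup] xx /andP[x0 x1].
have E1 := En_gt1 x xx.
rewrite phin0 phiE powS //.
set E := x `^ lam.
have -> : (lam * (lam + 1))^-1 * lam - (lam * (lam + 1))^-1 * (x * E - x + lam * (1 - x))
   = x * (- ((E - 1) / lam)) + x * E / (lam + 1).
  by field; rewrite l0' l1'.
rewrite /Dn -/E lerDl; apply: divr_ge0 => //; last exact: ltW.
by rewrite mulr_ge0 // ltW // (lt_trans ltr01).
Qed.


Lemma H5n (M : R) : exists2 eta : R, 0 < eta < 1 &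
  forall x, 0 < x <= eta -> M <= - Dn x.
Proof.
set B := 1 - lam * `|M|.
have B1 : 1 <= B by rewrite /B lerDl oppr_ge0; apply: mulr_le0_ge0; [exact: ltW|exact: normr_ge0].
have B0 : 0 < B by exact: lt_le_trans ltr01 B1.
exists (Num.min (2^-1) (expR (ln B / lam))).
  apply/andP; split; first by rewrite lt_min invr_gt0 ltr0n expR_gt0.
  by rewrite gt_min invf_lt1 ?ltr0n // ltr1n.
move=> x /andP[x0]; rewrite le_min => /andP[_ xe].
have lx : ln x <= ln B / lam.
  by rewrite -(expRK (ln B / lam)) ler_ln // posrE expR_gt0.
have lx2 : ln B <= lam * ln x.
  have := ler_wnM2l (ltW l0) lx; rewrite mulrC divfK //.
have EB : B <= x `^ lam by rewrite powE // -[B]lnK ?posrE // ler_expR.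
rewrite /Dn.
have -> : - ((x `^ lam - 1) / lam) = (x `^ lam - 1) / (- lam) by rewrite invrN mulrN.
rewrite ler_pdivlMr ?oppr_gt0 //.
have hM : M <= `|M| := ler_norm M.
have := ler_wpM2r (ltW (ltac:(by rewrite oppr_gt0) : 0 < - lam)) hM.
rewrite /B in EB; lra.
Qed.

Lemma H6n (e : R) : 0 < e -> exists2 eta : R, 0 < eta < 1 &
  forall x, 0 < x <= eta -> phi lam 0 - phi lam x <= e.
Proof.
move=> e0.
set B := e * (- lam) * (lam + 1).
have B0 : 0 < B by rewrite /B !mulr_gt0 // oppr_gt0.
exists (Num.min (2^-1) (expR (ln B / (lam + 1)))).
  apply/andP; split; first by rewrite lt_min invr_gt0 ltr0n expR_gt0.
  by rewrite gt_min invf_lt1 ?ltr0n // ltr1n.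
move=> x /andP[x0]; rewrite le_min => /andP[_ xe].
have lx : ln x <= ln B / (lam + 1).
  by rewrite -(expRK (ln B / (lam + 1))) ler_ln // posrE expR_gt0.
have lx2 : (lam + 1) * ln x <= ln B.
  by have := ler_wpM2l (ltW l1p) lx; rewrite mulrCA divff // mulr1.
have XB : x `^ (lam + 1) <= B by rewrite powE // -[B]lnK ?posrE // ler_expR.
rewrite phin0 phiE.
set X := x `^ (lam + 1).
have -> : (lam * (lam + 1))^-1 * lam - (lam * (lam + 1))^-1 * (X - x + lam * (1 - x))
  = (X - x * (lam + 1)) / (- lam * (lam + 1)) by field; rewrite l0' l1'.
rewrite ler_pdivrMr ?mulr_gt0 ?oppr_gt0 //.
have : 0 <= x * (lam + 1) by rewrite mulr_ge0 // ltW.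
rewrite /B in XB; move=> h; rewrite /X mulrA; lra.
Qed.

Lemma HD2n (x : R) : 0 < x < 1 -> is_derive x 1 Dn (D2n x).
Proof.
move=> /andP[x0 _].
have -> : Dn = (fun y : R => (y `^ lam - 1) * lam^-1) by apply/funext => y.
have hp := is_derive1_powR lam x0.
apply: is_derive_eq.
rewrite !scR /D2n; field.
exact: l0'.
Qed.


Lemma Hhn (lh : lam <= - (2%:R)^-1) (x y : R) : 0 < x -> x <= y -> y < 1 ->
  D2n y / Dn y ^+ 3 <= D2n x / Dn x ^+ 3.
Proof.
move=> x0 xy y1.
have y0 : 0 < y := lt_le_trans x0 xy.
have x1 : x < 1 := le_lt_trans xy y1.
have A1 := En_gt1 x (ltac:(by rewrite x0 x1)).
have B1 := En_gt1 y (ltac:(by rewrite y0 y1)).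
have pq : ln x <= ln y by rewrite ler_ln // posrE.
rewrite /D2n /Dn !powE // in A1 B1 *.
set p := ln x in pq A1 *; set q := ln y in pq B1 *.
set A := expR (lam * p) in A1 *; set B := expR (lam * q) in B1 *.
set ep := expR ((lam - 1) * p); set eq := expR ((lam - 1) * q).
have An : A - 1 != 0 by rewrite subr_eq0 gt_eqF.
have Bn : B - 1 != 0 by rewrite subr_eq0 gt_eqF.
have -> : eq / ((B - 1) / lam) ^+ 3 = lam ^+ 3 * (eq / (B - 1) ^+ 3) by field; rewrite Bn l0'.
have -> : ep / ((A - 1) / lam) ^+ 3 = lam ^+ 3 * (ep / (A - 1) ^+ 3) by field; rewrite An l0'.
have l3 : lam ^+ 3 < 0 by rewrite !exprS expr0 mulr1; nra.
rewrite ler_nM2l //.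
rewrite ler_pdivlMr ?exprn_gt0 ?subr_gt0 // mulrAC ler_pdivrMr ?exprn_gt0 ?subr_gt0 //.
have BA : B <= A by rewrite ler_expR; apply: ler_wnM2l => //; exact: ltW.
have ep0 : 0 <= ep by exact: expR_ge0.
have hexp : ep * B ^+ 3 <= eq * A ^+ 3.
  rewrite /A /B /ep /eq -!expRM_natl -!expRD ler_expR.
  have : 0 <= (q - p) * (- (2 * lam) - 1).
    apply: mulr_ge0; first by rewrite subr_ge0.
    lra.
  nra.
have hcube : (A * (B - 1)) ^+ 3 <= (B * (A - 1)) ^+ 3.
  apply: lerXn2r; rewrite ?nnegrE.
  - apply: mulr_ge0; lra.
  - apply: mulr_ge0; lra.
  - nra.
have k1 := ler_wpM2l ep0 hcube.
have k2 : ep * B ^+ 3 * (A - 1) ^+ 3 <= eq * A ^+ 3 * (A - 1) ^+ 3.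
  by apply: ler_wpM2r => //; apply: exprn_ge0; lra.
rewrite !exprMn in k1.
have A3 : 0 < A ^+ 3 by apply: exprn_gt0; lra.
rewrite -(ler_pM2r A3).
set a3 := A ^+ 3 in k1 k2 A3 *; set b3 := B ^+ 3 in k1 k2 *.
set u := (A - 1) ^+ 3 in k1 k2 *; set v := (B - 1) ^+ 3 in k1 k2 *.
have e1 : ep * v * a3 = ep * (a3 * v) by ring.
have e2 : eq * u * a3 = eq * a3 * u by ring.
have e3 : ep * (b3 * u) = ep * b3 * u by ring.
rewrite e1 e2; rewrite e3 in k1.
exact: le_trans k1 k2.
Qed.


Lemma Hncn (lg : - (2%:R)^-1 < lam) (K : R) : exists2 x : R, 0 < x < 2^-1 &
  K * (phi lam 0 - phi lam x) < - (Dn x)^-1.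
Proof.
have h2 : (2^-1 : R) < 1 by rewrite invf_lt1 ?ltr0n // ltr1n.
have h4 : (4^-1 : R) < 2^-1 by rewrite ltf_pV2 ?posrE ?ltr0n // ltr_nat.
have h40 : (0 : R) < 4^-1 by rewrite invr_gt0 ltr0n.
have gen x : 0 < x < 1 -> 0 < - (Dn x)^-1 /\ 0 < phi lam 0 - phi lam x.
  move=> xx; have d := Dnneg x xx; have h := H4n x xx.
  split; first by rewrite oppr_gt0 invr_lt0.
  case/andP: xx => x0 _; nra.
have [K0|K0] := leP K 0.
  exists 4^-1; first by rewrite h40 h4.
  have [g1 g2] := gen 4^-1 (ltac:(by rewrite h40 (lt_trans h4 h2))).
  nra.
set Q := lam ^+ 2 * (lam + 1) / K.
have lam2 : 0 < lam ^+ 2 by rewrite expr2 nmulr_rgt0.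
have Q0 : 0 < Q by rewrite /Q divr_gt0 // mulr_gt0.
set m := 1 + 2 * lam.
have m0 : 0 < m by rewrite /m; lra.
set z := expR (ln Q / m).
have z0 : 0 < z := expR_gt0 _.
set x := Num.min (4^-1) (z / 2).
have x0 : 0 < x by rewrite lt_min h40 divr_gt0.
have x4 : x <= 4^-1 by rewrite /x ge_min lexx.
have xz : x < z by rewrite /x gt_min; apply/orP; right; lra.
exists x; first by rewrite x0 (le_lt_trans x4 h4).
have x1 : x < 1 by lra.
have lx : ln x < ln Q / m by rewrite -[X in _ < X](expRK (ln Q / m)) ltr_ln ?posrE.
have lx2 : m * ln x < ln Q.
  by have := lx; rewrite -(ltr_pM2l m0) mulrCA divff ?mulr1 // gt_eqF.
have key : x * (x `^ lam) ^+ 2 < Q.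
  rewrite powE // -expRM_natl -[X in X * _](lnK (x:=x)) ?posrE // -expRD -[Q]lnK ?posrE // ltr_expR.
  rewrite /m in lx2; lra.
have key2 : K * (x * (x `^ lam) ^+ 2) < lam ^+ 2 * (lam + 1).
  have -> : lam ^+ 2 * (lam + 1) = K * Q by rewrite /Q; field; rewrite gt_eqF.
  by rewrite ltr_pM2l.
have E1 := En_gt1 x (ltac:(by rewrite x0 x1)).
rewrite phin0 phiE powS //.
set E := x `^ lam in E1 key key2 *.
have -> : (lam * (lam + 1))^-1 * lam - (lam * (lam + 1))^-1 * (x * E - x + lam * (1 - x))
  = (x * E - x * (lam + 1)) / (- lam * (lam + 1)) by field; rewrite l0' l1'.
have -> : - (Dn x)^-1 = (- lam) / (E - 1).
  by rewrite /Dn -/E; field; rewrite l0' subr_eq0 gt_eqF.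
have d1 : 0 < - lam * (lam + 1) by rewrite mulr_gt0 // oppr_gt0.
rewrite mulrA ltr_pdivrMr // mulrAC ltr_pdivlMr ?subr_gt0 //.
have hN : (x * E - x * (lam + 1)) * (E - 1) <= x * E ^+ 2.
  have : 0 <= x * ((E - 1) * (lam + 2)).
    apply: mulr_ge0; first exact: ltW.
    apply: mulr_ge0; lra.
  nra.
have := ler_wpM2l (ltW K0) hN.
nra.
Qed.

End negcase.

Section zerocase.
Variable R : realType.

Lemma phiz (x : R) : phi 0 x = 1 - x + x * ln x.
Proof. by rewrite /phi eqxx. Qed.

Lemma phiz0 : phi 0 0 = 1 :> R.
Proof. by rewrite phiz mul0r subr0 addr0. Qed.

Lemma phiz1 : phi 0 1 = 0 :> R.
Proof. by rewrite phiz ln1 mulr0 addr0 subrr. Qed.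

Lemma HDz (x : R) : 0 < x -> is_derive x 1 (phi 0) (ln x).
Proof.
move=> x0.
have -> : phi 0 = (fun y : R => 1 - y + y * ln y) by apply/funext => y; rewrite phiz.
have hl := is_derive1_ln x0.
apply: is_derive_eq.
rewrite !scR; field; by rewrite gt_eqF.
Qed.

Lemma Dzneg (x : R) : 0 < x < 1 -> ln x < 0.
Proof. exact: ln_lt0. Qed.

Lemma Dzmono (x y : R) : 0 < x -> x <= y -> y < 1 -> ln x <= ln y.
Proof. by move=> x0 xy _; rewrite ler_ln // posrE; exact: lt_le_trans xy. Qed.

Lemma H4z (x : R) : 0 < x < 1 -> x * (- ln x) <= phi 0 0 - phi 0 x.
Proof. by move=> /andP[x0 _]; rewrite phiz0 phiz; lra. Qed.

Lemma H5z (M : R) : exists2 eta : R, 0 < eta < 1 &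
  forall x, 0 < x <= eta -> M <= - ln x.
Proof.
exists (Num.min (2^-1) (expR (- M))).
  apply/andP; split; first by rewrite lt_min invr_gt0 ltr0n expR_gt0.
  by rewrite gt_min invf_lt1 ?ltr0n // ltr1n.
move=> x /andP[x0]; rewrite le_min => /andP[_ xe].
have : ln x <= - M by rewrite -(expRK (- M)) ler_ln // posrE expR_gt0.
lra.
Qed.

Lemma H6z (e : R) : 0 < e -> exists2 eta : R, 0 < eta < 1 &
  forall x, 0 < x <= eta -> phi 0 0 - phi 0 x <= e.
Proof.
move=> e0.
exists (Num.min (2^-1) (Num.min (e / 2) (e ^+ 2 / 8))).
  apply/andP; split.
    by rewrite !lt_min invr_gt0 ltr0n !divr_gt0 ?exprn_gt0.
  by rewrite gt_min invf_lt1 ?ltr0n // ltr1n.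
move=> x /andP[x0]; rewrite !le_min => /andP[x2 /andP[xe1 xe2]].
have x1 : x < 1 by apply: le_lt_trans x2 _; rewrite invf_lt1 ?ltr0n // ltr1n.
set s := - ln x.
have s0 : 0 <= s by rewrite /s oppr_ge0 ltW // ln_lt0 // x0 x1.
have hs := expR_ge1Dxn 1 s0.
have f2 : ((2`!)%:R : R) = 2 by [].
rewrite f2 /s expRN lnK ?posrE // -/s in hs.
have hx : x * s ^+ 2 <= 2.
  have : x * (1 + s ^+ 2 / 2) <= 1.
    by have := ler_wpM2l (ltW x0) hs; rewrite mulfV // gt_eqF.
  have : 0 <= x by exact: ltW.
  nra.
have hxs : (x * s) ^+ 2 <= (e / 2) ^+ 2.
  have -> : (x * s) ^+ 2 = x * (x * s ^+ 2) by ring.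
  apply: le_trans (_ : x * 2 <= _).
    by apply: ler_wpM2l => //; exact: ltW.
  have -> : (e / 2) ^+ 2 = e ^+ 2 / 8 * 2 by field.
  by rewrite ler_pM2r.
have xs0 : 0 <= x * s by rewrite mulr_ge0 // ltW.
have hxs2 : x * s <= e / 2.
  by rewrite -(ler_pXn2r (isT : (0 < 2)%N)) ?nnegrE // divr_ge0 // ltW.
rewrite phiz0 phiz.
have : x * ln x = - (x * s) by rewrite /s mulrN opprK.
lra.
Qed.

Lemma Hncz (K : R) : exists2 x : R, 0 < x < 2^-1 &
  K * (phi 0 0 - phi 0 x) < - (ln x)^-1.
Proof.
have h2 : (2^-1 : R) < 1 by rewrite invf_lt1 ?ltr0n // ltr1n.
have h4 : (4^-1 : R) < 2^-1 by rewrite ltf_pV2 ?posrE ?ltr0n // ltr_nat.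
have h40 : (0 : R) < 4^-1 by rewrite invr_gt0 ltr0n.
have [K0|K0] := leP K 0.
  exists 4^-1; first by rewrite h40 h4.
  have xx : 0 < (4^-1 : R) < 1 by apply/andP; split => //; exact: lt_trans h4 h2.
  have g1 : 0 < - (ln (4^-1 : R))^-1 by rewrite oppr_gt0 invr_lt0 ln_lt0.
  have g2 := H4z _ xx.
  have g3 : 0 < 4^-1 * - ln (4^-1 : R) by rewrite mulr_gt0 // oppr_gt0 ln_lt0.
  nra.
set s := 1 + 12 * K.
have s1 : 1 <= s by rewrite /s; lra.
have s0 : 0 < s by lra.
set X := expR s.
have hX := expR_ge1Dxn 2 (ltW s0).
have f3 : ((3`!)%:R : R) = 6 by [].
rewrite f3 -/X in hX.
have X0 : 0 < X := expR_gt0 s.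
exists (expR (- s)).
  rewrite expR_gt0 /=.
  apply: le_lt_trans (_ : expR (-1) < _).
    by rewrite ler_expR lerN2.
  rewrite expRN -[X in _ < X]invrK ltf_pV2 ?posrE ?expR_gt0 ?invr_gt0 ?ltr0n //.
  have := expR_gt1Dx (oner_neq0 R); lra.
rewrite phiz0 phiz expRK expRN -/X invrN opprK.
have -> : K * (1 - (1 - X^-1 + X^-1 * - s)) = K * (1 + s) / X.
  by field; rewrite gt_eqF.
rewrite ltr_pdivrMr // [s^-1 * X]mulrC ltr_pdivlMr //.
have a1 : K * (1 + s) * s <= 2 * K * s ^+ 2.
  have : 0 <= K * s * (s - 1) by rewrite !mulr_ge0 ?subr_ge0 // ltW.
  rewrite expr2; lra.
have a2 : 2 * K * s ^+ 2 < s ^+ 3 / 6.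
  have e : s ^+ 3 / 6 - 2 * K * s ^+ 2 = s ^+ 2 / 6 by rewrite /s; field.
  have : 0 < s ^+ 2 / 6 by rewrite divr_gt0 ?exprn_gt0.
  lra.
lra.
Qed.

End zerocase.

Theorem lemma3 (R : realType) (lam : R) (hlam : -1 < lam <= 0) :
  let f := fun t : R => - derive1 (phi_pinv lam) t in
  nonincreasing_pos f /\
  (lam <= - (2%:R)^-1 -> convex_pos f) /\
  (- (2%:R)^-1 < lam -> ~ convex_pos f).
Proof.
move=> f.
have -> : f = @F R (phi lam) by [].
case/andP: hlam => l1 l0.
have h2 : (0 : R) < 2^-1 by rewrite invr_gt0 ltr0n.
have [lz|ln0] := eqVneq lam 0.
  subst lam.
  split; [|split].
  - apply: (@Fnonincr R (phi 0) (@ln R)).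
    + exact: phiz1.
    + exact: HDz.
    + exact: Dzneg.
    + exact: Dzmono.
    + exact: H4z.
    + exact: H5z.
    + exact: H6z.
  - by move=> h; exfalso; lra.
  - move=> _.
    apply: (@Fnonconvex R (phi 0) (@ln R)).
    + exact: phiz1.
    + exact: HDz.
    + exact: Dzneg.
    + exact: H4z.
    + exact: H5z.
    + exact: H6z.
    + exact: Hncz.
have l0' : lam < 0 by rewrite lt_neqAle ln0 l0.
split; [|split].
- apply: (@Fnonincr R (phi lam) (@Dn R lam)).
  + by apply: phin1.
  + by apply: HDn.
  + by apply: Dnneg.
  + by apply: Dnmono.
  + by apply: H4n.
  + by apply: H5n.
  + by apply: H6n.
- move=> lh.
  apply: (@Fconvex R (phi lam) (@Dn R lam)).
  + by apply: phin1.
  + by apply: HDn.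
  + by apply: Dnneg.
  + by apply: H4n.
  + by apply: H5n.
  + by apply: H6n.
  + by apply: HD2n.
  + by apply: Hhn.
- move=> lg.
  apply: (@Fnonconvex R (phi lam) (@Dn R lam)).
  + by apply: phin1.
  + by apply: HDn.
  + by apply: Dnneg.
  + by apply: H4n.
  + by apply: H5n.
  + by apply: H6n.
  + by apply: Hncn.
Qed.
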